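(* For all positive integers $t,s$, the complete bipartite graph $K_{4t,4s+2}$ has an almost 2-perfect 8-cycle decomposition.
   Context: An 8-cycle decomposition of a graph $G$ is a collection of pairwise edge-disjoint 8-cycles in $G$ whose edge sets partition $E(G)$. For an 8-cycle $C$, an inside 8-cycle of $C$ is an 8-cycle on the same vertex set as $C$ sharing no edge with $C$. An 8-cycle decomposition $\mathcal{C}$ of $G$ is almost 2-perfect (A2P) if one can choose, for each $C\in\mathcal{C}$, an inside 8-cycle $C'$ of $C$ with all edges in $G$, such that the chosen cycles $\{C'\}$ again form an 8-cycle decomposition of $G$. *)

(* Defs.v *)
From mathcomp Require Import all_boot.
Set Implicit Arguments. Unset Strict Implicit. Unset Printing Implicit Defensive.

(* A simple graph: symmetric irreflexive relation e on a finite vertex type T.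
   An edge is the 2-element vertex set {x, y}. *)
Definition edges (T : finType) (e : rel T) : {set {set T}} :=
  [set [set p.1; p.2] | p in [set p : T * T | e p.1 p.2]].

Definition is_8cycle (T : finType) (e : rel T) (C : {set {set T}}) : Prop :=
  exists v : 'I_8 -> T,
    [/\ injective v,
        (forall i : 'I_8, e (v i) (v (ordS i)))
      & C = [set [set v i; v (ordS i)] | i : 'I_8]].

Definition cyc_verts (T : finType) (C : {set {set T}}) : {set T} := cover C.

Definition is_8cycle_decomp (T : finType) (e : rel T) (D : {set {set {set T}}}) : Prop :=
  (forall C, C \in D -> is_8cycle e C) /\ partition D (edges e).

Definition inside_8cycle (T : finType) (e : rel T) (C C' : {set {set T}}) : Prop :=
  [/\ is_8cycle e C', cyc_verts C' = cyc_verts C & [disjoint C' & C]].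

Definition A2P_decomp (T : finType) (e : rel T) (D : {set {set {set T}}}) : Prop :=
  is_8cycle_decomp e D /\
  exists f : {set {set T}} -> {set {set T}},
    [/\ {in D &, injective f},
        (forall C, C \in D -> inside_8cycle e C (f C))
      & is_8cycle_decomp e [set f C | C in D]].

Definition has_A2P_8cycle_decomp (T : finType) (e : rel T) : Prop :=
  exists D, A2P_decomp e D.

Definition Kbip_rel (m n : nat) : rel ('I_m + 'I_n)%type :=
  fun x y => match x, y with
             | inl _, inr _ | inr _, inl _ => true
             | _, _ => false
             end.
Arguments Kbip_rel m n : clear implicits.

(* Main.v *)
Require Import Defs.
From mathcomp Require Import all_boot.
From mathcomp Require Import zify.
Set Implicit Arguments. Unset Strict Implicit. Unset Printing Implicit Defensive.

Definition Ecyc (T : finType) (v : 'I_8 -> T) : {set {set T}} :=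
  [set [set v i; v (ordS i)] | i : 'I_8].
Definition cyc_ok (T : finType) (e : rel T) (v : 'I_8 -> T) :=
  injective v /\ forall i, e (v i) (v (ordS i)).
Definition emat (T : finType) (v : 'I_8 -> T) i x y :=
  (v i = x /\ v (ordS i) = y) \/ (v i = y /\ v (ordS i) = x).
Definition same (T : finType) (a b : 'I_8 -> T) i j := emat b j (a i) (a (ordS i)).

Definition good (T : finType) (e : rel T) n (c p : 'I_n -> 'I_8 -> T) :=
 [/\ forall k, cyc_ok e (c k) /\ cyc_ok e (p k),
     forall x y, e x y -> (exists k i, emat (c k) i x y) /\ (exists k i, emat (p k) i x y),
     forall k l i j, (same (c k) (c l) i j -> k = l) /\ (same (p k) (p l) i j -> k = l),
     forall k i, (exists j, c k i = p k j) /\ (exists j, p k i = c k j)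
   & forall k i j, ~ same (c k) (p k) i j].
Definition hasgood (T : finType) (e : rel T) := exists n c p, @good T e n c p.

Lemma set2_eqE (T : finType) (a b x y : T) :
  [set a; b] = [set x; y] -> (a = x /\ b = y) \/ (a = y /\ b = x).
Proof.
move=> H.
have ha : a \in [set x; y] by rewrite -H set21.
have hb : b \in [set x; y] by rewrite -H set22.
have hx : x \in [set a; b] by rewrite H set21.
have hy : y \in [set a; b] by rewrite H set22.
move/set2P: ha => ha; move/set2P: hb => hb; move/set2P: hx => hx; move/set2P: hy => hy.
case: ha hb hx hy => -> [] -> [] ? [] ?; subst; auto.
Qed.

Lemma cyc8 (T : finType) (e : rel T) v : cyc_ok e v -> is_8cycle e (Ecyc v).
Proof. by case=> h1 h2; exists v; split. Qed.

Lemma inEcyc (T : finType) (v : 'I_8 -> T) E :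
  E \in Ecyc v -> exists i, E = [set v i; v (ordS i)].
Proof. by case/imsetP => i _ ->; exists i. Qed.

Lemma Ecyc_same (T : finType) (a b : 'I_8 -> T) E :
  E \in Ecyc a -> E \in Ecyc b -> exists i j, same a b i j.
Proof.
move=> /inEcyc [i ->] /inEcyc [j] /set2_eqE H; exists i, j.
rewrite /same /emat; case: H => [[-> ->]|[-> ->]]; auto.
Qed.

Lemma Ecyc_n0 (T : finType) (v : 'I_8 -> T) : Ecyc v != set0.
Proof.
apply/set0Pn; exists [set v ord0; v (ordS ord0)]; exact: imset_f.
Qed.

Lemma cover_Ecyc (T : finType) (v : 'I_8 -> T) : cover (Ecyc v) = [set v i | i : 'I_8].
Proof.
apply/setP => x; rewrite cover_imset; apply/bigcupP/imsetP.
- by case=> i _ /set2P [] ->; [exists i | exists (ordS i)].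
- case=> i _ ->; exists i => //; exact: set21.
Qed.

Lemma decomp (T : finType) (e : rel T) n (c : 'I_n -> 'I_8 -> T) :
  (forall k, cyc_ok e (c k)) ->
  (forall x y, e x y -> exists k i, emat (c k) i x y) ->
  (forall k l i j, same (c k) (c l) i j -> k = l) ->
  is_8cycle_decomp e [set Ecyc (c k) | k : 'I_n].
Proof.
move=> Hc Hcov Hu; split.
  by move=> C /imsetP [k _ ->]; apply: cyc8.
apply/and3P; split.
- apply/eqP/setP => E; rewrite cover_imset; apply/bigcupP/imsetP.
  + case=> k _ /inEcyc [i ->]; exists (c k i, c k (ordS i)) => //.
    by rewrite inE /=; case: (Hc k).
  + case=> [[x y]]; rewrite inE /= => /Hcov [k [i H]] ->; exists k => //.
    apply/imsetP; exists i => //.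
    by case: H => [[<- <-]|[<- <-]] //; rewrite setUC.
- apply/trivIsetP => A B /imsetP [k _ ->] /imsetP [l _ ->] Hne.
  rewrite -setI_eq0; apply/eqP/setP => E; rewrite inE in_set0.
  apply/negbTE/negP => /andP [h1 h2].
  case: (Ecyc_same h1 h2) => i [j /Hu Hkl].
  by move: Hne; rewrite Hkl eqxx.
- apply/negP => /imsetP [k _ H]; move: (Ecyc_n0 (c k)); by rewrite -H eqxx.
Qed.

Lemma Ecyc_inj (T : finType) n (c : 'I_n -> 'I_8 -> T) :
  (forall k l i j, same (c k) (c l) i j -> k = l) ->
  forall k l, Ecyc (c k) = Ecyc (c l) -> k = l.
Proof.
move=> Hu k l H.
have h : [set c k ord0; c k (ordS ord0)] \in Ecyc (c k) by exact: imset_f.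
have h' := h; rewrite H in h'.
by case: (Ecyc_same h h') => i [j /Hu].
Qed.

Lemma good_A2P (T : finType) (e : rel T) n c p :
  @good T e n c p -> has_A2P_8cycle_decomp e.
Proof.
case=> Hc Hcov Hu Hv Hd.
have Hcc k : cyc_ok e (c k) by case: (Hc k).
have Hpc k : cyc_ok e (p k) by case: (Hc k).
have Huc k l i j : same (c k) (c l) i j -> k = l by case: (Hu k l i j).
have Hup k l i j : same (p k) (p l) i j -> k = l by case: (Hu k l i j).
pose f C := if [pick k | Ecyc (c k) == C] is Some k then Ecyc (p k) else C.
have fE k : f (Ecyc (c k)) = Ecyc (p k).
  rewrite /f; case: pickP => [k' /eqP /(Ecyc_inj Huc) -> //|H].
  by move: (H k); rewrite eqxx.
exists [set Ecyc (c k) | k : 'I_n]; split.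
  apply: decomp => // x y /Hcov []; auto.
exists f; split.
- move=> A B /imsetP [k _ ->] /imsetP [l _ ->]; rewrite !fE.
  by move/(Ecyc_inj Hup) ->.
- move=> C /imsetP [k _ ->]; rewrite fE; split.
  + exact: cyc8.
  + rewrite /cyc_verts !cover_Ecyc; apply/setP => x; apply/imsetP/imsetP.
    * case=> i _ ->; case: (Hv k i) => _ [j ->]; by exists j.
    * case=> i _ ->; case: (Hv k i) => [[j ->]] _; by exists j.
  + rewrite -setI_eq0; apply/eqP/setP => E; rewrite inE in_set0.
    apply/negbTE/negP => /andP [h1 h2].
    by case: (Ecyc_same h2 h1) => i [j /Hd].
- have -> : [set f C | C in [set Ecyc (c k) | k : 'I_n]] = [set Ecyc (p k) | k : 'I_n].
    rewrite -imset_comp; apply: eq_imset => k /=; exact: fE.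
  apply: decomp => // x y /Hcov []; auto.
Qed.

Lemma cyc_ok_mono (T : finType) (e1 e : rel T) v :
  (forall x y, e1 x y -> e x y) -> cyc_ok e1 v -> cyc_ok e v.
Proof. by move=> H [h1 h2]; split=> // i; apply: H. Qed.

Lemma emat_edge (T : finType) (e : rel T) v i x y :
  cyc_ok e v -> emat v i x y -> e x y \/ e y x.
Proof. by case=> _ h [[<- <-]|[<- <-]]; auto. Qed.

Definition cat_f (T : finType) n1 n2 (c1 : 'I_n1 -> 'I_8 -> T) (c2 : 'I_n2 -> 'I_8 -> T)
  (k : 'I_(n1 + n2)) : 'I_8 -> T :=
  match split k with inl a => c1 a | inr b => c2 b end.

Lemma union_good (T : finType) (e e1 e2 : rel T) :
  hasgood e1 -> hasgood e2 ->
  (forall x y, e x y = e1 x y || e2 x y) ->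
  (forall x y, e1 x y -> e2 x y -> False) ->
  (forall x y, e1 x y -> e2 y x -> False) ->
  hasgood e.
Proof.
move=> [n1 [c1 [p1 [Hc1 Hcov1 Hu1 Hv1 Hd1]]]] [n2 [c2 [p2 [Hc2 Hcov2 Hu2 Hv2 Hd2]]]] He D1 D2.
have m1 x y : e1 x y -> e x y by rewrite He => ->.
have m2 x y : e2 x y -> e x y by rewrite He orbC => ->.
have cross : forall a b i j, cyc_ok e1 a -> cyc_ok e2 b -> ~ same a b i j.
  move=> a b i j ha hb hs; have [_ ha'] := ha.
  case: (emat_edge hb hs) => h; [exact: (D1 _ _ (ha' i) h) | exact: (D2 _ _ (ha' i) h)].
have cross' : forall a b i j, cyc_ok e1 a -> cyc_ok e2 b -> ~ same b a j i.
  move=> a b i j ha hb hs; have [_ hb'] := hb.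
  case: (emat_edge ha hs) => h; [exact: (D1 _ _ h (hb' j)) | exact: (D2 _ _ h (hb' j))].
have Hc1c k : cyc_ok e1 (c1 k) by case: (Hc1 k).
have Hc1p k : cyc_ok e1 (p1 k) by case: (Hc1 k).
have Hc2c k : cyc_ok e2 (c2 k) by case: (Hc2 k).
have Hc2p k : cyc_ok e2 (p2 k) by case: (Hc2 k).
have spl (k l : 'I_(n1 + n2)) : split k = split l -> k = l.
  by move=> H; rewrite -(splitK k) -(splitK l) H.
exists (n1 + n2), (cat_f c1 c2), (cat_f p1 p2); split.
- move=> k; rewrite /cat_f; case: (split k) => a.
  + by case: (Hc1 a) => h1 h2; split; apply: cyc_ok_mono h1 || apply: cyc_ok_mono h2.
  + by case: (Hc2 a) => h1 h2; split; apply: cyc_ok_mono h1 || apply: cyc_ok_mono h2.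
- move=> x y; rewrite He => /orP [] h.
  + case: (Hcov1 x y h) => [[k [i H1]] [k' [i' H2]]]; split.
    * by exists (unsplit (inl k)), i; rewrite /cat_f unsplitK.
    * by exists (unsplit (inl k')), i'; rewrite /cat_f unsplitK.
  + case: (Hcov2 x y h) => [[k [i H1]] [k' [i' H2]]]; split.
    * by exists (unsplit (inr k)), i; rewrite /cat_f unsplitK.
    * by exists (unsplit (inr k')), i'; rewrite /cat_f unsplitK.
- move=> k l i j; rewrite /cat_f; case Ek: (split k) => [a|a]; case El: (split l) => [b|b].
  + case: (Hu1 a b i j) => h1 h2; split=> /= H; apply: spl; rewrite Ek El; congr inl; auto.
  + split=> H; [case: (cross _ _ _ _ (Hc1c a) (Hc2c b) H) | case: (cross _ _ _ _ (Hc1p a) (Hc2p b) H)].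
  + split=> H; [case: (cross' _ _ _ _ (Hc1c b) (Hc2c a) H) | case: (cross' _ _ _ _ (Hc1p b) (Hc2p a) H)].
  + case: (Hu2 a b i j) => h1 h2; split=> /= H; apply: spl; rewrite Ek El; congr inr; auto.
- by move=> k i; rewrite /cat_f; case: (split k) => a; [apply: Hv1 | apply: Hv2].
- by move=> k i j; rewrite /cat_f; case: (split k) => a; [apply: Hd1 | apply: Hd2].
Qed.

Lemma map_good (T1 T : finType) (e1 : rel T1) (e : rel T) (g : T1 -> T) :
  injective g ->
  (forall a b, e (g a) (g b) = e1 a b) ->
  (forall x y, e x y -> exists a b, x = g a /\ y = g b) ->
  hasgood e1 -> hasgood e.
Proof.
move=> gi He Hr [n [c [p [Hc Hcov Hu Hv Hd]]]].
have cy v : cyc_ok e1 v -> cyc_ok e (fun i => g (v i)).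
  case=> h1 h2; split; [exact: inj_comp | by move=> i; rewrite He].
have em v i a b : emat v i a b -> emat (fun i => g (v i)) i (g a) (g b).
  by rewrite /emat /=; case=> [[-> ->]|[-> ->]]; [left|right].
have sm u v i j : same (fun i => g (u i)) (fun i => g (v i)) i j -> same u v i j.
  by rewrite /same /emat /=; case=> [[/gi -> /gi ->]|[/gi -> /gi ->]]; [left|right].
exists n, (fun k i => g (c k i)), (fun k i => g (p k i)); split.
- by move=> k; case: (Hc k) => h1 h2; split; apply: cy.
- move=> x y /[dup] /Hr [a [b [-> ->]]]; rewrite He => /Hcov [[k [i h1]] [k' [i' h2]]].
  by split; [exists k, i | exists k', i']; apply: em.
- by move=> k l i j; case: (Hu k l i j) => h1 h2; split=> /sm.
- move=> k i; case: (Hv k i) => [[j h1] [j' h2]].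
  by split; [exists j | exists j']; rewrite ?h1 ?h2.
- by move=> k i j /sm; apply: Hd.
Qed.

Notation Kb := Kbip_rel.

Lemma K_cast (m n m' n' : nat) : m = m' -> n = n' -> hasgood (Kb m n) -> hasgood (Kb m' n').
Proof. by move=> -> ->. Qed.

Definition swp m n (x : ('I_m + 'I_n)%type) : ('I_n + 'I_m)%type :=
  match x with inl a => inr a | inr b => inl b end.

Lemma K_swap m n : hasgood (Kb m n) -> hasgood (Kb n m).
Proof.
apply: (@map_good _ _ _ _ (@swp m n)).
- by move=> [a|a] [b|b] //= [->].
- by move=> [a|a] [b|b].
- move=> [a|a] [b|b] //= _; [exists (inr a), (inl b) | exists (inl a), (inr b)]; by [].
Qed.

Definition e_lo m m' n (x y : ('I_(m + m') + 'I_n)%type) : bool :=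
  match x, y with inl a, inr _ | inr _, inl a => a < m | _, _ => false end.
Definition e_hi m m' n (x y : ('I_(m + m') + 'I_n)%type) : bool :=
  match x, y with inl a, inr _ | inr _, inl a => m <= a | _, _ => false end.

Lemma K_addA m m' n : hasgood (Kb m n) -> hasgood (Kb m' n) -> hasgood (Kb (m + m') n).
Proof.
move=> h1 h2.
apply: (@union_good _ _ (@e_lo m m' n) (@e_hi m m' n)).
- pose g (x : ('I_m + 'I_n)%type) : ('I_(m + m') + 'I_n)%type :=
    match x with inl a => inl (lshift m' a) | inr b => inr b end.
  apply: (@map_good _ _ _ _ g) h1.
  + by move=> [a|a] [b|b] //= [] // /eqP h; congr _; apply/eqP.
  + by move=> [a|a] [b|b] //=; rewrite ltn_ord.
  + move=> [a|a] [b|b] //= h.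
    * exists (inl (Ordinal h)), (inr b); split=> //; congr inl; exact: val_inj.
    * exists (inr a), (inl (Ordinal h)); split=> //; congr inl; exact: val_inj.
- pose g (x : ('I_m' + 'I_n)%type) : ('I_(m + m') + 'I_n)%type :=
    match x with inl a => inl (rshift m a) | inr b => inr b end.
  apply: (@map_good _ _ _ _ g) h2.
  + move=> [a|a] [b|b] //= [] //; last by move=> ->.
    by move/addnI => h; congr inl; apply: val_inj.
  + by move=> [a|a] [b|b] //=; rewrite leq_addr.
  + move=> [a|a] [b|b] //= h.
    * have h' : a - m < m' by rewrite ltn_subLR // ltn_ord.
      exists (inl (Ordinal h')), (inr b); split=> //; congr inl; apply: val_inj => /=.
      by rewrite subnKC.
    * have h' : b - m < m' by rewrite ltn_subLR // ltn_ord.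
      exists (inr a), (inl (Ordinal h')); split=> //; congr inl; apply: val_inj => /=.
      by rewrite subnKC.
- by move=> [a|a] [b|b] //=; case: ltnP.
- by move=> [a|a] [b|b] //= /leq_trans h /h; rewrite ltnn.
- by move=> [a|a] [b|b] //= /leq_trans h /h; rewrite ltnn.
Qed.

Lemma K_addB m n n' : hasgood (Kb m n) -> hasgood (Kb m n') -> hasgood (Kb m (n + n')).
Proof. by move=> /K_swap h1 /K_swap h2; apply: K_swap; apply: K_addA. Qed.

Definition mko n (i : nat) : option 'I_n :=
  (if i < n as b return (i < n = b -> option 'I_n) then fun h => Some (Ordinal h) else fun _ => None) erefl.
Definition ordl n : seq 'I_n := pmap (@mko n) (iota 0 n).
Lemma mem_ordl n (x : 'I_n) : x \in ordl n.
Proof.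
rewrite mem_pmap; apply/mapP; exists (val x); first by rewrite mem_iota /= add0n ltn_ord.
rewrite /mko; case: x => m Hm /=.
move: (erefl (m < n)); rewrite {2 3}Hm => h. by congr Some; apply: val_inj.
Qed.

Definition allo n (P : 'I_n -> bool) := all P (ordl n).
Definition haso n (P : 'I_n -> bool) := has P (ordl n).
Lemma alloP n (P : 'I_n -> bool) : allo P -> forall i, P i.
Proof. by move/allP => H i; apply: H; apply: mem_ordl. Qed.
Lemma hasoP n (P : 'I_n -> bool) : haso P -> exists i, P i.
Proof. by case/hasP => i _ h; exists i. Qed.

Definition ematb (T : finType) (v : 'I_8 -> T) i x y :=
  ((v i == x) && (v (ordS i) == y)) || ((v i == y) && (v (ordS i) == x)).
Lemma ematbP (T : finType) (v : 'I_8 -> T) i x y : ematb v i x y -> emat v i x y.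
Proof. by case/orP => /andP [/eqP h1 /eqP h2]; [left|right]. Qed.
Lemma ematbN (T : finType) (v : 'I_8 -> T) i x y : ~~ ematb v i x y -> ~ emat v i x y.
Proof. by move/negP => H [[h1 h2]|[h1 h2]]; apply: H; rewrite /ematb h1 h2 !eqxx ?orbT. Qed.

Definition cyc_okb (T : finType) (e : rel T) (v : 'I_8 -> T) :=
  allo (fun i => allo (fun j => (v i == v j) ==> (i == j))) && allo (fun i => e (v i) (v (ordS i))).
Lemma cyc_okbP (T : finType) (e : rel T) v : cyc_okb e v -> cyc_ok e v.
Proof.
case/andP => /alloP h1 /alloP h2; split=> // i j /eqP h.
by move/alloP: (h1 i) => /(_ j); rewrite h => /eqP.
Qed.

Definition goodb (T : finType) (univ : seq T) (e : rel T) n (c p : 'I_n -> 'I_8 -> T) :=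
 [&& allo (fun k => cyc_okb e (c k) && cyc_okb e (p k)),
     all (fun x => all (fun y => e x y ==>
        (haso (fun k => haso (fun i => ematb (c k) i x y)) &&
         haso (fun k => haso (fun i => ematb (p k) i x y)))) univ) univ,
     allo (fun k => allo (fun l => allo (fun i => allo (fun j =>
        (ematb (c l) j (c k i) (c k (ordS i)) ==> (k == l)) &&
        (ematb (p l) j (p k i) (p k (ordS i)) ==> (k == l)))))),
     allo (fun k => allo (fun i => haso (fun j => c k i == p k j) && haso (fun j => p k i == c k j)))
   & allo (fun k => allo (fun i => allo (fun j => ~~ ematb (p k) j (c k i) (c k (ordS i)))))].

Lemma goodbP (T : finType) (univ : seq T) e n c p :
  (forall x, x \in univ) -> @goodb T univ e n c p -> hasgood e.
Proof.
move=> Hu /and5P [/alloP h1 /allP h2 /alloP h3 /alloP h4 /alloP h5].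
exists n, c, p; split.
- by move=> k; case/andP: (h1 k) => /cyc_okbP ? /cyc_okbP.
- move=> x y exy; move/allP: (h2 x (Hu x)) => /(_ y (Hu y)); rewrite exy /=.
  case/andP => /hasoP [k /hasoP [i /ematbP hk]] /hasoP [k' /hasoP [i' /ematbP hk']].
  by split; [exists k, i | exists k', i'].
- move=> k l i j; move/alloP: (h3 k) => /(_ l) /alloP /(_ i) /alloP /(_ j) /andP [q1 q2].
  split=> hs; apply/eqP.
  + by move: q1; case: (boolP (ematb _ _ _ _)) => // /ematbN.
  + by move: q2; case: (boolP (ematb _ _ _ _)) => // /ematbN.
- move=> k i; move/alloP: (h4 k) => /(_ i) /andP [/hasoP [j /eqP q1] /hasoP [j' /eqP q2]].
  by split; [exists j | exists j'].
- by move=> k i j; move/alloP: (h5 k) => /(_ i) /alloP /(_ j) /ematbN.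
Qed.

Definition T46 : finType := ('I_4 + 'I_6)%type.
Definition T44 : finType := ('I_4 + 'I_4)%type.
Definition univ46 : seq T46 := map inl (ordl 4) ++ map inr (ordl 6).
Definition univ44 : seq T44 := map inl (ordl 4) ++ map inr (ordl 4).
Lemma univ46P x : x \in univ46.
Proof. by rewrite mem_cat; case: x => a; rewrite mem_map ?mem_ordl ?orbT //; move=> ? ? []. Qed.
Lemma univ44P x : x \in univ44.
Proof. by rewrite mem_cat; case: x => a; rewrite mem_map ?mem_ordl ?orbT //; move=> ? ? []. Qed.

(* vertex codes: 0..3 = A side, 10+j = B side j *)
Definition vx m (v : nat) : ('I_4 + 'I_m)%type :=
  if v < 10 then inl (odflt ord0 (mko 4 v)) else
  match m as m0 return ('I_4 + 'I_m0)%type with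
  | 0 => inl ord0 | m1.+1 => inr (odflt ord0 (mko m1.+1 (v - 10))) end.
Definition mkc m (tbl : seq (seq nat)) n (k : 'I_n) (i : 'I_8) : ('I_4 + 'I_m)%type :=
  vx m (nth 0 (nth [::] tbl k) i).

Definition c44 := [:: [:: 0;10;1;11;2;12;3;13]; [:: 0;11;3;10;2;13;1;12]].
Definition p44 := [:: [:: 0;11;3;10;2;13;1;12]; [:: 0;10;1;11;2;12;3;13]].
Definition c46 := [:: [:: 0;10;1;11;2;12;3;13]; [:: 0;14;1;15;2;10;3;11]; [:: 0;12;1;13;2;14;3;15]].
Definition p46 := [:: [:: 10;2;13;1;12;0;11;3]; [:: 0;10;1;11;2;14;3;15]; [:: 1;14;0;13;3;12;2;15]].

Lemma K44 : hasgood (Kbip_rel 4 4).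
Proof.
apply: (@goodbP T44 univ44 (Kbip_rel 4 4) 2 (@mkc 4 c44 _) (@mkc 4 p44 _) univ44P).
by vm_compute.
Qed.
Lemma K46 : hasgood (Kbip_rel 4 6).
Proof.
apply: (@goodbP T46 univ46 _ 3 (@mkc 6 c46 _) (@mkc 6 p46 _) univ46P).
by vm_compute.
Qed.

Lemma K4s s : 0 < s -> hasgood (Kb 4 (4 * s + 2)).
Proof.
elim: s => // [[|s]] IH _.
- by apply: (K_cast (erefl 4) (erefl 6)); exact: K46.
- apply: (K_cast (erefl 4) (_ : (4 * s.+1 + 2) + 4 = 4 * s.+2 + 2)).
    by rewrite !mulnS; lia.
  by apply: K_addB; [exact: IH | exact: K44].
Qed.

Lemma Kts t s : 0 < t -> 0 < s -> hasgood (Kb (4 * t) (4 * s + 2)).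
Proof.
move=> + hs; elim: t => // [[|t]] IH _.
- by apply: (K_cast (erefl 4) (erefl _)); exact: K4s.
- apply: (K_cast (_ : 4 * t.+1 + 4 = 4 * t.+2) (erefl _)).
    by rewrite !mulnS; lia.
  by apply: K_addA; [exact: IH | exact: K4s].
Qed.

Theorem lemma2p2 (t s : nat) : 0 < t -> 0 < s ->
  has_A2P_8cycle_decomp (Kbip_rel (4 * t) (4 * s + 2)).
Proof.
move=> ht hs; case: (Kts ht hs) => n [c [p H]]; exact: good_A2P H.
Qed.
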